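(* Let $A=(a_{pq})$ be an $m\times m$ coloring matrix. Suppose $I,J\subseteq\{1,\dots,m\}$ are disjoint sets with $|I|=|J|$ such that $\sum_{i\in I}t_A^{(i)}(n)=\sum_{j\in J}t_A^{(j)}(n)$ for all $n$, and that $\ell\in\{1,\dots,m\}$ is a color (possibly in $I$ or $J$) with $a_{\ell i}=0$ for all $i\in I$ and $a_{\ell j}=1$ for all $j\in J$. Let $B=(b_{pq})$ be the $m\times m$ coloring matrix defined by $b_{pq}=1$ if $p=\ell$ and $q\in I$, $b_{pq}=0$ if $p=\ell$ and $q\in J$, and $b_{pq}=a_{pq}$ otherwise. Then $A$ and $B$ are strictly tree coloring equivalent. Furthermore, for all $n\ge1$, $$\sum_{i\in I}t^{(i)}_A(n)=\sum_{j\in J}t^{(j)}_A(n)=\sum_{i\in I}t^{(i)}_{B}(n)=\sum_{j\in J}t^{(j)}_{B}(n).$$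
   Context: A plane tree is an unlabeled rooted tree in which the children of every vertex are linearly ordered. A coloring matrix is an $m\times m$ matrix $A=(a_{ij})$ with entries in $\{0,1\}$. An $A$-coloring of a plane tree assigns to each vertex a color in $\{1,\dots,m\}$ such that whenever a vertex of color $j$ is a child of a vertex of color $i$, $a_{ij}=1$. Let $t_A^{(i)}(n)$ be the number of pairs (plane tree with $n$ vertices, $A$-coloring of it) in which the root has color $i$. Two $m\times m$ coloring matrices $A,B$ are strictly tree coloring equivalent if $t_A^{(i)}(n)=t_B^{(i)}(n)$ for all $n\ge1$ and all $1\le i\le m$. *)

(* Defs.v *)
From mathcomp Require Import all_boot all_algebra.
From Stdlib Require Import ClassicalEpsilon.
Set Implicit Arguments. Unset Strict Implicit. Unset Printing Implicit Defensive.

(* A coloring matrix: an m x m matrix with entries in {0,1}, encoded as bool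
   (true = 1, false = 0).  Colors {1,..,m} are encoded as 'I_m. *)

(* A pair (plane tree, coloring of its vertices) is the same thing as a plane
   tree each of whose vertices carries a color: a vertex with color c and the
   ordered list of its (colored) child subtrees. *)
Inductive ctree (m : nat) : Type :=
  CNode of 'I_m & seq (ctree m).

Definition root_color m (t : ctree m) : 'I_m := let: CNode c _ := t in c.

Fixpoint csize m (t : ctree m) : nat :=
  let: CNode _ ts := t in (foldr (fun u acc => csize u + acc) 1 ts).

Fixpoint Acolored m (A : 'M[bool]_m) (t : ctree m) : bool :=
  let: CNode c ts := t in
  foldr (fun u acc => [&& A c (root_color u), Acolored A u & acc]) true ts.

Definition has_card (T : Type) (P : T -> Prop) (k : nat) : Prop :=
  exists f : 'I_k -> T, injective f /\ (forall x, P x <-> exists i, f i = x).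

Definition tA m (A : 'M[bool]_m) (i : 'I_m) (n : nat) : nat :=
  epsilon (inhabits 0%N)
    (fun k => has_card (fun t : ctree m =>
                 [/\ csize t = n, root_color t = i & Acolored A t]) k).

Definition strictly_tree_coloring_equivalent m (A B : 'M[bool]_m) : Prop :=
  forall n, (1 <= n)%N -> forall i : 'I_m, tA A i n = tA B i n.

Definition switch_mx m (A : 'M[bool]_m) (I J : {set 'I_m}) (l : 'I_m)
  : 'M[bool]_m :=
  \matrix_(p, q) if p == l then
                   (if q \in I then true else if q \in J then false else A p q)
                 else A p q.

(* Main.v *)
Require Import Defs.
From mathcomp Require Import all_boot all_algebra.
From HB Require Import structures.
From Stdlib Require Import ClassicalEpsilon.
From Stdlib Require List.
Set Implicit Arguments. Unset Strict Implicit. Unset Printing Implicit Defensive.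

Section Eq.
Variable m : nat.

Definition ctree_ind2 (P : ctree m -> Prop)
  (H : forall c ts, List.Forall P ts -> P (CNode c ts)) : forall t, P t :=
  fix F t := match t with CNode c ts => H c ts
    ((fix G ts : List.Forall P ts := match ts with
       | [::] => List.Forall_nil _
       | u :: us => List.Forall_cons u (F u) (G us) end) ts) end.

Fixpoint ceq (t u : ctree m) {struct t} : bool :=
  match t, u with
  | CNode c ts, CNode d us =>
    (c == d) && (fix aux (ts us : seq (ctree m)) : bool :=
       match ts, us with
       | [::], [::] => true
       | t :: ts, u :: us => ceq t u && aux ts us
       | _, _ => false end) ts us
  end.

Lemma ceq_iff t : forall u, ceq t u <-> t = u.
Proof.
elim/ctree_ind2: t => c ts IH [d us] /=.
split=> [/andP [/eqP -> H]|[-> <-]].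
  congr CNode; elim: ts us IH H => [|t ts IHts] [|u us] //= IH.
  inversion IH as [|x y Ht Hts]; subst.
  by move/andP=> [/Ht -> /(IHts _ Hts) ->].
rewrite eqxx /=; elim: ts IH => //= t ts IHts IH.
inversion IH as [|x y Ht Hts]; subst.
by rewrite (IHts Hts) andbT; apply/Ht.
Qed.

Lemma ceqP : Equality.axiom ceq.
Proof. by move=> t u; apply: (iffP idP) => /ceq_iff. Qed.

HB.instance Definition _ := hasDecEq.Build (ctree m) ceqP.
End Eq.

Lemma csizeE m c (ts : seq (ctree m)) : csize (CNode c ts) = (sumn (map (@csize m) ts)).+1.
Proof. by elim: ts => //= u ts ->; rewrite addnS. Qed.

Lemma csize_gt0 m (t : ctree m) : 0 < csize t.
Proof. by case: t => c ts; rewrite csizeE. Qed.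

Lemma AcoloredE m (A : 'M[bool]_m) c ts :
  Acolored A (CNode c ts) = all (fun u => A c (root_color u) && Acolored A u) ts.
Proof. by elim: ts => //= u ts ->; rewrite andbA. Qed.

Lemma uniq_flatten_key (X T : eqType) (s : seq X) (F : X -> seq T) (key : T -> option X) :
  uniq s -> (forall x, x \in s -> uniq (F x)) ->
  (forall x z, x \in s -> z \in F x -> key z = Some x) -> uniq (flatten (map F s)).
Proof.
elim: s => //= x s IH /andP [xs us] uF kF.
rewrite cat_uniq uF ?mem_head // IH //; last first.
- by move=> y z ys; apply: kF; rewrite inE ys orbT.
- by move=> y ys; apply: uF; rewrite inE ys orbT.
rewrite andbT; apply/hasPn => z /flatten_mapP [y ys zy].
apply/negP => zx.
have := kF x z (mem_head _ _) zx; rewrite (kF y z _ zy); last by rewrite inE ys orbT.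
by case=> eyx; move: xs; rewrite -eyx ys.
Qed.

Section Enum.
Variables (m : nat) (A : 'M[bool]_m).

Definition forest_ok (r : 'I_m) (n : nat) (g : seq (ctree m)) : bool :=
 [&& all (fun t => A r (root_color t)) g, all (Acolored A) g & sumn (map (@csize m) g) == n].

Fixpoint fr (N : nat) (r : 'I_m) (n : nat) : seq (seq (ctree m)) :=
  match n with
  | 0 => [:: [::]]
  | n'.+1 => match N with
    | 0 => [::]
    | N'.+1 =>
     flatten [seq flatten [seq [seq CNode j f :: g | f <- fr N' j k, g <- fr N' r (n' - k)]
                          | j <- [seq j <- index_enum 'I_m | A r j]]
             | k <- iota 0 n]
    end
  end.

Lemma fr0_spec N r : uniq (fr N r 0) /\ forall g, (g \in fr N r 0) = forest_ok r 0 g.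
Proof.
have -> : fr N r 0 = [:: [::]] by case: N.
split=> // g; rewrite inE /forest_ok; case: g => [|t g] //=.
by rewrite addn_eq0 (negbTE (lt0n_neq0 (csize_gt0 t))) !andbF.
Qed.

Lemma fr_spec N : forall r n, n <= N ->
  uniq (fr N r n) /\ forall g, (g \in fr N r n) = forest_ok r n g.
Proof.
elim: N => [|N IH] r [|n] hn; try exact: fr0_spec; first by [].
move: hn; rewrite ltnS => hn.
split.
  apply: (@uniq_flatten_key _ _ _ _ (fun z => if z is t :: _ then Some (csize t).-1 else None)).
  + exact: iota_uniq.
  + move=> k; rewrite mem_iota leq0n add0n ltnS /= => hk.
    apply: (@uniq_flatten_key _ _ _ _ (fun z => if z is t :: _ then Some (root_color t) else None)).
    * by rewrite filter_uniq // index_enum_uniq.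
    * move=> j _; apply: allpairs_uniq.
      - by case: (IH j k (leq_trans hk hn)).
      - by case: (IH r (n - k) (leq_trans (leq_subr _ _) hn)).
      - by move=> [a b] [c d] _ _ /= [-> ->].
    * by move=> j z _ /allpairsP [[f g] [_ _ ->]].
  + move=> k z; rewrite mem_iota leq0n add0n ltnS /= => hk /flatten_mapP [j _] /allpairsP [[f g] [/= hf _ ->]].
    case: (IH j k (leq_trans hk hn)) => _ E; move: hf; rewrite E /forest_ok => /and3P [_ _ /eqP <-].
    by rewrite csizeE.
move=> g; apply/idP/idP.
  move/flatten_mapP=> [k]; rewrite mem_iota leq0n add0n ltnS /= => hk.
  move/flatten_mapP=> [j]; rewrite mem_filter => /andP [Arj _].
  move/allpairsP=> [[f g'] [/= hf hg' ->]].
  case: (IH j k (leq_trans hk hn)) => _ E; move: hf; rewrite E /forest_ok => /and3P [h1 h2 /eqP h3].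
  case: (IH r (n - k) (leq_trans (leq_subr _ _) hn)) => _ E'.
  move: hg'; rewrite E' /forest_ok => /and3P [h4 h5 /eqP h6].
  have hc : Acolored A (CNode j f).
    by rewrite AcoloredE; apply/allP => u hu; rewrite (allP h1 u hu) (allP h2 u hu).
  apply/and3P; split; first by rewrite /= Arj h4.
    by apply/andP; split.
  change (csize (CNode j f) + sumn (map (@csize m) g') == n.+1).
  by rewrite csizeE h3 h6 addSn subnKC.
case: g => [|[j f] g']; rewrite /forest_ok; first by [].
move=> /and3P [/andP [Arj h4] /andP [ha h5]].
move: ha; rewrite AcoloredE => ha.
move=> hs0.
have : csize (CNode j f) + sumn (map (@csize m) g') = n.+1 by apply/eqP.
rewrite csizeE addSn => -[hs].
have {}h4 : all (fun t => A r (root_color t)) g' := h4.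
have {}h5 : all (Acolored A) g' := h5.
set k := sumn (map (@csize m) f) in hs.
have hk : k <= n by rewrite -hs leq_addr.
apply/flatten_mapP; exists k; first by rewrite mem_iota leq0n add0n ltnS /=.
apply/flatten_mapP; exists j; first by rewrite mem_filter Arj mem_index_enum.
apply/allpairsP; exists (f, g'); split=> //=.
  case: (IH j k (leq_trans hk hn)) => _ ->.
  rewrite /forest_ok; apply/and3P; split=> //; apply/allP => u hu;
    by case/andP: (allP ha u hu).
case: (IH r (n - k) (leq_trans (leq_subr _ _) hn)) => _ ->.
by rewrite /forest_ok h4 h5 -hs addKn /=.
Qed.

End Enum.

Definition fc m (A : 'M[bool]_m) r n := size (fr A n r n).

Lemma fr_size m (A : 'M[bool]_m) N r n : n <= N -> size (fr A N r n) = fc A r n.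
Proof.
move=> hn; case: (fr_spec A r hn) => u1 E1; case: (fr_spec A r (leqnn n)) => u2 E2.
by apply: perm_size; apply: uniq_perm => // g; rewrite E1 E2.
Qed.

Lemma fc_rec m (A : 'M[bool]_m) r n :
  fc A r n.+1 = \sum_(k < n.+1) \sum_(j | A r j) fc A j k * fc A r (n - k).
Proof.
rewrite /fc (_ : fr A n.+1 r n.+1 = flatten [seq flatten [seq [seq CNode j f :: g | f <- fr A n j k, g <- fr A n r (n - k)]
                          | j <- [seq j <- index_enum 'I_m | A r j]]
             | k <- iota 0 n.+1]) //.
rewrite size_flatten /shape -map_comp sumnE big_map.
rewrite (_ : iota 0 n.+1 = index_iota 0 n.+1); last by rewrite /index_iota subn0.
rewrite big_mkord; apply: eq_bigr => k _.
have hk : k <= n by rewrite -ltnS ltn_ord.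
rewrite /= size_flatten /shape -map_comp sumnE big_map big_filter.
apply: eq_bigr => j _ /=; by rewrite size_allpairs !fr_size // ?leq_subr.
Qed.

Lemma has_card_uniq (T : eqType) (P : T -> Prop) k k' :
  has_card P k -> has_card P k' -> k = k'.
Proof.
move=> [f [fi fs]] [f' [fi' fs']].
have mem g (h : 'I_g -> T) : (forall x, P x <-> exists i, h i = x) ->
    forall x, (x \in map h (enum 'I_g)) <-> P x.
  move=> hs x; split.
    by move/mapP=> [i _ ->]; apply/hs; exists i.
  by move/hs=> [i <-]; apply/mapP; exists i; rewrite ?mem_enum.
rewrite -(size_enum_ord k) -(size_enum_ord k') -(size_map f) -(size_map f').
apply: perm_size; apply: uniq_perm.
- by rewrite map_inj_uniq ?enum_uniq.
- by rewrite map_inj_uniq ?enum_uniq.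
by move=> x; apply/idP/idP => h; [apply/(mem _ _ fs'); apply/(mem _ _ fs) | apply/(mem _ _ fs); apply/(mem _ _ fs')].
Qed.

Lemma has_card_seq (T : eqType) (x0 : T) (P : T -> Prop) (s : seq T) :
  uniq s -> (forall x, P x <-> x \in s) -> has_card P (size s).
Proof.
move=> us hs; exists (fun i : 'I_(size s) => nth x0 s i); split.
  by move=> i j /eqP; rewrite nth_uniq // => /eqP /val_inj.
move=> x; split.
  move/hs=> xs; exists (Ordinal (etrans (index_mem x s) xs) : 'I_(size s)).
  by rewrite /= nth_index.
by move=> [i <-]; apply/hs; rewrite mem_nth.
Qed.

Lemma tA_fc m (A : 'M[bool]_m) i n : tA A i n.+1 = fc A i n.
Proof.
have H : has_card (fun t : ctree m =>
                 [/\ csize t = n.+1, root_color t = i & Acolored A t])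
            (size (map (CNode i) (fr A n i n))).
  apply: (has_card_seq (CNode i [::])).
    rewrite map_inj_uniq; first by case: (fr_spec A i (leqnn n)).
    by move=> x y [].
  case: (fr_spec A i (leqnn n)) => _ E.
  move=> [c ts]; split.
    move=> [hs hr ha]; rewrite /= in hr; rewrite hr in ha *; apply/mapP; exists ts => //.
    rewrite E /forest_ok; move: hs ha; rewrite csizeE AcoloredE => -[->] ha.
    rewrite eqxx andbT; apply/andP; split; apply/allP => u hu;
      by case/andP: (allP ha u hu).
  move/mapP=> [ts' hts [-> ->]]; move: hts; rewrite E /forest_ok.
  move=> /and3P [h1 h2 /eqP h3]; split=> //.
    by rewrite csizeE h3.
  by rewrite AcoloredE; apply/allP => u hu; rewrite (allP h1 u hu) (allP h2 u hu).
rewrite size_map in H.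
apply: (has_card_uniq _ H).
exact: (epsilon_spec (inhabits 0) _ (ex_intro _ _ H)).
Qed.

Section Main.
Variables (m : nat) (A : 'M[bool]_m) (I J : {set 'I_m}) (l : 'I_m).
Hypotheses (dIJ : [disjoint I & J])
  (hyp : forall k, (\sum_(i in I) fc A i k = \sum_(j in J) fc A j k)%N)
  (hI : forall i, i \in I -> A l i = false)
  (hJ : forall j, j \in J -> A l j = true).

Let B := switch_mx A I J l.

Lemma row_sum (F : 'I_m -> nat) :
  (\sum_(i in I) F i = \sum_(j in J) F j)%N ->
  (\sum_(j | A l j) F j = \sum_(j | B l j) F j)%N.
Proof.
move=> e.
rewrite (bigID (fun j => j \in I :|: J)) [RHS](bigID (fun j => j \in I :|: J)) /=.
have Bl j : B l j = if j \in I then true else if j \in J then false else A l j.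
  by rewrite /B mxE eqxx.
congr addn.
  rewrite (eq_bigl (fun j => j \in J)); last first.
    move=> j; rewrite in_setU; case: (boolP (j \in I)) => jI /=.
      by rewrite hI // (disjointFr dIJ jI).
    by case: (boolP (j \in J)) => jJ; [rewrite (hJ jJ) | rewrite andbF].
  rewrite -e; apply: eq_bigl => j; rewrite Bl in_setU.
  case: (boolP (j \in I)) => jI //=.
  by case: (boolP (j \in J)) => jJ; rewrite ?andbF.
apply: eq_bigl => j; rewrite Bl in_setU.
by case: (boolP (j \in I)) => jI; case: (boolP (j \in J)) => jJ; rewrite ?andbF.
Qed.

Lemma main N : forall r n, n <= N -> fc A r n = fc B r n.
Proof.
elim: N => [|N IH] r n hn.
  by move: hn; rewrite leqn0 => /eqP ->; rewrite /fc.
case: (leqP n N) => [|hN]; first exact: IH.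
have -> : n = N.+1 by apply/eqP; rewrite eqn_leq hn.
rewrite !fc_rec; apply: eq_bigr => k _.
have hk : k <= N by rewrite -ltnS ltn_ord.
rewrite -IH ?leq_subr //.
rewrite -!big_distrl /=; congr muln.
rewrite [RHS](eq_bigr (fun j => fc A j k)); last by move=> j _; rewrite IH.
case: (eqVneq r l) => [->|rl]; first exact: row_sum (hyp k).
by apply: eq_bigl => j; rewrite /B mxE (negbTE rl).
Qed.
End Main.

Theorem theorem15 (m : nat) (A : 'M[bool]_m) (I J : {set 'I_m}) (l : 'I_m) :
  [disjoint I & J] ->
  #|I| = #|J| ->
  (forall n, (1 <= n)%N ->
     (\sum_(i in I) tA A i n = \sum_(j in J) tA A j n)%N) ->
  (forall i, i \in I -> A l i = false) ->
  (forall j, j \in J -> A l j = true) ->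
  strictly_tree_coloring_equivalent A (switch_mx A I J l) /\
  (forall n, (1 <= n)%N ->
     [/\ (\sum_(i in I) tA A i n = \sum_(j in J) tA A j n)%N,
         (\sum_(j in J) tA A j n = \sum_(i in I) tA (switch_mx A I J l) i n)%N
       & (\sum_(i in I) tA (switch_mx A I J l) i n
          = \sum_(j in J) tA (switch_mx A I J l) j n)%N]).
Proof.
move=> dIJ _ hyp hI hJ.
have hyp' k : (\sum_(i in I) fc A i k = \sum_(j in J) fc A j k)%N.
  rewrite -(eq_bigr _ (fun i _ => tA_fc A i k)) -(eq_bigr _ (fun i _ => tA_fc A i k)).
  exact: hyp.
have E : strictly_tree_coloring_equivalent A (switch_mx A I J l).
  move=> [|n] // _ i; rewrite !tA_fc; exact: (@main _ _ _ _ _ dIJ hyp' hI hJ n i n (leqnn n)).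
split=> // n hn.
have Ei i : tA A i n = tA (switch_mx A I J l) i n := E n hn i.
rewrite -!(eq_bigr _ (fun i _ => Ei i)) hyp //.
Qed.
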